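(* Let $\mathcal{X},\mathcal{Y}$ be finite Markov chains and $C:{\bm X}\times{\bm Y}\to\mathbb{R}_+$ a cost function. Let $p\in\mathcal{P}(\mathbb{N})$ and let $(p_k)_{k\in\mathbb{N}}\subseteq\mathcal{P}(\mathbb{N})$ satisfy $\lim_{k\to\infty}d_{\mathrm{TV}}(p_k,p)=0$, where $d_{\mathrm{TV}}$ is the total variation distance. Then $\lim_{k\to\infty}d^{p_k}_{\mathrm{OTM}}(\mathcal{X},\mathcal{Y};C)=d^{p}_{\mathrm{OTM}}(\mathcal{X},\mathcal{Y};C)$.
   Context: A finite Markov chain $\mathcal{X}=({\bm X},m^{\bm X}_\bullet,\nu^{\bm X})$ consists of a finite set ${\bm X}$, a transition kernel $m^{\bm X}_\bullet:{\bm X}\to\mathcal{P}({\bm X})$ and an initial distribution $\nu^{\bm X}$. $\mathcal{C}(\alpha,\beta)$ denotes the set of couplings of $\alpha,\beta$. A Markovian coupling between $\mathcal{X}$ and $\mathcal{Y}$ is a (possibly time-inhomogeneous) Markov chain $(X_t,Y_t)_{t\in\mathbb{N}}$ on ${\bm X}\times{\bm Y}$ with $\mathrm{law}(X_0,Y_0)\in\mathcal{C}(\nu^{\bm X},\nu^{\bm Y})$ and, for all $t,x,y$, the conditional law of $(X_{t+1},Y_{t+1})$ given $(X_t,Y_t)=(x,y)$ in $\mathcal{C}(m^{\bm X}_x,m^{\bm Y}_y)$. For $q\in\mathcal{P}(\mathbb{N})$ and $T\sim q$, $d^{q}_{\mathrm{OTM}}(\mathcal{X},\mathcal{Y};C)=\inf\mathbb{E}\,C(X_T,Y_T)$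 over all Markovian couplings independent of $T$. *)

(* Defs.v *)
From HB Require Import structures.
From mathcomp Require Import all_boot all_order all_algebra.
From mathcomp Require Import all_classical all_reals all_analysis.
Set Implicit Arguments. Unset Strict Implicit. Unset Printing Implicit Defensive.
Import Order.TTheory GRing.Theory Num.Theory.
Local Open Scope ring_scope.
Local Open Scope classical_set_scope.

Section Defs.
Variable R : realType.

Definition is_prob (T : finType) (mu : {ffun T -> R}) : Prop :=
  (forall x, 0 <= mu x) /\ \sum_(x : T) mu x = 1.

Definition is_probN (q : nat -> R) : Prop :=
  (forall n, 0 <= q n) /\ (\sum_(0 <= n <oo) (q n)%:E = 1)%E.

Definition dTV (p q : nat -> R) : \bar R :=
  ((2^-1)%:E * \sum_(0 <= n <oo) (`|p n - q n|)%:E)%E.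

Definition is_markov_chain (X : finType) (m : X -> {ffun X -> R})
  (nu : {ffun X -> R}) : Prop :=
  (forall x, is_prob (m x)) /\ is_prob nu.

Definition is_coupling (X Y : finType) (a : {ffun X -> R}) (b : {ffun Y -> R})
  (pi : {ffun X * Y -> R}) : Prop :=
  is_prob pi /\ (forall x, \sum_(y : Y) pi (x, y) = a x)
             /\ (forall y, \sum_(x : X) pi (x, y) = b y).

(* A (possibly time-inhomogeneous) Markovian coupling, given by its initial law
   pi0 and its transition kernels K t (x,y) on X * Y. *)
Definition is_markovian_coupling (X Y : finType)
  (mX : X -> {ffun X -> R}) (nuX : {ffun X -> R})
  (mY : Y -> {ffun Y -> R}) (nuY : {ffun Y -> R})
  (pi0 : {ffun X * Y -> R}) (K : nat -> X * Y -> {ffun X * Y -> R}) : Prop :=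
  is_coupling nuX nuY pi0 /\
  (forall t x y, is_coupling (mX x) (mY y) (K t (x, y))).

Fixpoint law_at (X Y : finType) (pi0 : {ffun X * Y -> R})
  (K : nat -> X * Y -> {ffun X * Y -> R}) (t : nat) : {ffun X * Y -> R} :=
  match t with
  | 0 => pi0
  | t'.+1 => [ffun z' => \sum_(z : X * Y) law_at pi0 K t' z * K t' z z']
  end.

Definition exp_cost_at (X Y : finType) (C : X -> Y -> R)
  (pi0 : {ffun X * Y -> R}) (K : nat -> X * Y -> {ffun X * Y -> R}) (t : nat) : R :=
  \sum_(z : X * Y) law_at pi0 K t z * C z.1 z.2.

(* E C(X_T, Y_T) with T ~ q independent of the coupling *)
Definition exp_cost_T (X Y : finType) (C : X -> Y -> R) (q : nat -> R)
  (pi0 : {ffun X * Y -> R}) (K : nat -> X * Y -> {ffun X * Y -> R}) : \bar R :=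
  (\sum_(0 <= t <oo) (q t * exp_cost_at C pi0 K t)%:E)%E.

Definition dOTM (X Y : finType)
  (mX : X -> {ffun X -> R}) (nuX : {ffun X -> R})
  (mY : Y -> {ffun Y -> R}) (nuY : {ffun Y -> R})
  (C : X -> Y -> R) (q : nat -> R) : \bar R :=
  ereal_inf [set c | exists (pi0 : {ffun X * Y -> R})
                         (K : nat -> X * Y -> {ffun X * Y -> R}),
     is_markovian_coupling mX nuX mY nuY pi0 K /\ c = exp_cost_T C q pi0 K].

End Defs.

(* Main.v *)
Require Import Defs.
From HB Require Import structures.
From mathcomp Require Import all_boot all_order all_algebra.
From mathcomp Require Import all_classical all_reals all_analysis.
From mathcomp Require Import ring lra.
Set Implicit Arguments. Unset Strict Implicit. Unset Printing Implicit Defensive.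
Import Order.TTheory GRing.Theory Num.Theory.
Local Open Scope ring_scope.
Local Open Scope classical_set_scope.

Section L.
Variable R : realType.
Variables X Y : finType.
Variable C : X -> Y -> R.
Hypothesis C0 : forall x y, 0 <= C x y.

Lemma law_prob (pi0 : {ffun X * Y -> R}) K :
  is_prob pi0 -> (forall t z, is_prob (K t z)) -> forall t, is_prob (law_at pi0 K t).
Proof.
move=> H0 HK; elim=> [//|t [IH1 IH2]] /=; split.
  move=> z'; rewrite ffunE; apply: sumr_ge0 => z _; apply: mulr_ge0 => //.
  by case: (HK t z) => + _; apply.
under eq_bigr do rewrite ffunE.
rewrite exchange_big /= -IH2; apply: eq_bigr => z _.
by rewrite -mulr_sumr; case: (HK t z) => _ ->; rewrite mulr1.
Qed.

Definition Mc := \sum_(z : X * Y) C z.1 z.2.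

Lemma Mc_ge0 : 0 <= Mc.
Proof. by apply: sumr_ge0 => z _; apply: C0. Qed.

Lemma cost_bnd (pi0 : {ffun X * Y -> R}) K t :
  is_prob (law_at pi0 K t) -> 0 <= exp_cost_at C pi0 K t <= Mc.
Proof.
move=> [H1 H2]; apply/andP; split.
  by apply: sumr_ge0 => z _; apply: mulr_ge0.
apply: ler_sum => z _.
have le1 : law_at pi0 K t z <= 1.
  rewrite -H2 (bigD1 z) //= lerDl; apply: sumr_ge0 => *; exact: H1.
by rewrite -[leRHS]mul1r ler_wpM2r.
Qed.
Local Open Scope ereal_scope.

Lemma ser_le (a : nat -> R) (M : R) (q p : nat -> R) :
  (forall t, 0 <= a t <= M)%R -> is_probN q -> is_probN p ->
  \sum_(0 <= t <oo) (q t * a t)%:E <=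
  \sum_(0 <= t <oo) (p t * a t)%:E + M%:E * \sum_(0 <= t <oo) (`|q t - p t|)%:E.
Proof.
move=> Ha [q0 _] [p0 _].
have M0 : (0 <= M)%R by case/andP: (Ha 0%N) => h1 h2; exact: le_trans h2.
rewrite -nneseriesZl; last by move=> i _; rewrite lee_fin.
rewrite -nneseriesD; first last.
- by move=> i _ _; rewrite lee_fin mulr_ge0.
- by move=> i _ _; case/andP: (Ha i) => ? ?; rewrite lee_fin mulr_ge0 ?p0.
apply: lee_nneseries.
  by move=> i _ _; case/andP: (Ha i) => ? ?; rewrite lee_fin mulr_ge0 ?q0.
move=> n _; rewrite -EFinM -EFinD lee_fin.
case/andP: (Ha n) => a0 aM.
have -> : (q n * a n = p n * a n + (q n - p n) * a n)%R by ring.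
rewrite lerD2l (le_trans (ler_wpM2r a0 (ler_norm _))) //.
by rewrite mulrC; apply: ler_wpM2r.
Qed.

Lemma ser_ge0_leM (a : nat -> R) (M : R) (q : nat -> R) :
  (forall t, 0 <= a t <= M)%R -> is_probN q ->
  0 <= \sum_(0 <= t <oo) (q t * a t)%:E <= M%:E.
Proof.
move=> Ha [q0 q1].
have M0 : (0 <= M)%R by case/andP: (Ha 0%N) => h1 h2; exact: le_trans h2.
apply/andP; split.
  by apply: nneseries_ge0 => i _ _; case/andP: (Ha i) => ? ?; rewrite lee_fin mulr_ge0.
rewrite -[leRHS]mule1 -q1 -nneseriesZl; last by move=> i _; rewrite lee_fin.
apply: lee_nneseries.
  by move=> i _ _; case/andP: (Ha i) => ? ?; rewrite lee_fin mulr_ge0 ?q0.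
move=> n _; rewrite -EFinM lee_fin mulrC.
by case/andP: (Ha n) => ? ?; rewrite ler_wpM2r.
Qed.
Local Close Scope ereal_scope.
Lemma prod_coupling (a : {ffun X -> R}) (b : {ffun Y -> R}) :
  is_prob a -> is_prob b -> is_coupling a b [ffun z => a z.1 * b z.2].
Proof.
move=> [a0 a1] [b0 b1]; split; [split|split].
- by move=> z; rewrite ffunE mulr_ge0.
- under eq_bigr do rewrite ffunE.
  rewrite -(pair_bigA _ (fun x y => a x * b y)) /= -a1.
  by apply: eq_bigr => x _; rewrite -mulr_sumr b1 mulr1.
- by move=> x; under eq_bigr do rewrite ffunE /=; rewrite -mulr_sumr b1 mulr1.
- by move=> y; under eq_bigr do rewrite ffunE /=; rewrite -mulr_suml a1 mul1r.
Qed.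

Variables (mX : X -> {ffun X -> R}) (nuX : {ffun X -> R})
  (mY : Y -> {ffun Y -> R}) (nuY : {ffun Y -> R}).
Hypotheses (HX : is_markov_chain mX nuX) (HY : is_markov_chain mY nuY).

Lemma coupling_cost_bnd pi0 K : is_markovian_coupling mX nuX mY nuY pi0 K ->
  forall t, (0 <= exp_cost_at C pi0 K t <= Mc)%R.
Proof.
move=> [[H0 _] HK] t; apply: cost_bnd; apply: law_prob => // t' [x y].
by case: (HK t' x y).
Qed.

Local Open Scope ereal_scope.

Lemma dOTM_bnd q : is_probN q -> 0 <= dOTM mX nuX mY nuY C q <= Mc%:E.
Proof.
move=> Hq; apply/andP; split.
  apply: le_ereal_inf_tmp => c [pi0 [K [HK ->]]].
  by case/andP: (ser_ge0_leM (coupling_cost_bnd HK) Hq).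
apply: ge_ereal_inf.
have HK : is_markovian_coupling mX nuX mY nuY [ffun z => (nuX z.1 * nuY z.2)%R]
   (fun _ z => [ffun z' => (mX z.1 z'.1 * mY z.2 z'.2)%R]).
  case: HX => HX1 HX2; case: HY => HY1 HY2.
  by split; [exact: prod_coupling | move=> t x y; exact: prod_coupling].
eexists; first by do 2 eexists; split; [exact: HK| reflexivity].
by case/andP: (ser_ge0_leM (coupling_cost_bnd HK) Hq).
Qed.

Lemma dOTM_key q p (s : R) : is_probN q -> is_probN p ->
  \sum_(0 <= t <oo) (`|q t - p t|)%:E = s%:E ->
  dOTM mX nuX mY nuY C q <= dOTM mX nuX mY nuY C p + (Mc * s)%:E.
Proof.
move=> Hq Hp Hs; rewrite -leeBlDr //; apply: le_ereal_inf_tmp => c [pi0 [K [HK ->]]].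
rewrite leeBlDr //; apply: le_trans (_ : exp_cost_T C q pi0 K <= _).
  by apply: ereal_inf_lbound; exists pi0, K.
by rewrite EFinM -Hs; apply: ser_le => //; exact: coupling_cost_bnd.
Qed.
End L.

Local Open Scope ereal_scope.
Theorem lemma9 (R : realType) (X Y : finType)
  (mX : X -> {ffun X -> R}) (nuX : {ffun X -> R})
  (mY : Y -> {ffun Y -> R}) (nuY : {ffun Y -> R})
  (C : X -> Y -> R) (p : nat -> R) (pk : nat -> nat -> R) :
  is_markov_chain mX nuX -> is_markov_chain mY nuY ->
  (forall x y, (0 <= C x y)%R) ->
  is_probN p -> (forall k, is_probN (pk k)) ->
  dTV (pk k) p @[k --> \oo] --> 0%E ->
  dOTM mX nuX mY nuY C (pk k) @[k --> \oo] --> dOTM mX nuX mY nuY C p.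
Proof.
move=> HX HY C0 Hp Hpk Hd.
have bnd := @dOTM_bnd R X Y C C0 mX nuX mY nuY HX HY.
have key := @dOTM_key R X Y C C0 mX nuX mY nuY.
set l := dOTM mX nuX mY nuY C p.
have lfin : l \is a fin_num.
  case/andP: (bnd p Hp) => l0 lM.
  by rewrite ge0_fin_numE // (le_lt_trans lM) // ltey.
pose S k := \sum_(0 <= t <oo) (`|pk k t - p t|)%:E.
have SE k : S k = 2%:E * dTV (pk k) p.
  by rewrite /dTV muleA -EFinM divff // mul1e.
have e0 : (fun k => (Mc C)%:E * S k) @ \oo --> 0.
  under eq_fun do rewrite SE muleA -EFinM.
  rewrite -(mule0 ((Mc C * 2)%:E)); exact: cvgeZl.
have fl : (fun k => l - (Mc C)%:E * S k) @ \oo --> l.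
  rewrite -[X in _ --> X](sube0 l); apply: cvgeB => //; last exact: cvg_cst.
  exact: fin_num_adde_defr.
have hl : (fun k => l + (Mc C)%:E * S k) @ \oo --> l.
  rewrite -[X in _ --> X](adde0 l); apply: cvgeD => //; last exact: cvg_cst.
  exact: fin_num_adde_defr.
apply: (squeeze_cvge _ fl hl).
have /fine_cvgP[Fin _] := Hd.
near=> k.
have dfin : dTV (pk k) p \is a fin_num by near: k.
have Sfin : S k \is a fin_num by rewrite SE fin_numM.
rewrite -(fineK Sfin) -EFinM; apply/andP; split.
- rewrite leeBlDr //; apply: key => //.
  rewrite fineK // /S; apply: eq_eseriesr => t _.
  by rewrite distrC.
- by apply: key => //; rewrite fineK.
Unshelve. all: end_near.
Qed.
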